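(* Let $P$ be a multiprogram in which at most one thread per process calls deliver, and let $\widehat C$ be a finite computation of $\mathrm{TS}(P)$ satisfying $\mathrm{NW}$. Then for all processes $\widehat p,\widehat r$, the writes performed by $\widehat p$ to its variable $T[\widehat r]$, taken in program order, write strictly increasing values.
   Context: $\mathrm{NW}$ (message-passing network model): processes communicate by $\mathrm{send}(s,d,m)$/$\mathrm{recv}(s,d,m)$ of uniquely identified messages; messages from a given sender to a given receiver are received in the order sent (FIFO channels), each message is received at most once and only after being sent; threads within a process share local variables whose accesses are sequentially consistent. Formally $\mathrm{NW}(C)$ holds iff for each process there is a valid total order of its operations extending $\to_{\mathrm{HappensBefore}}$, the transitive closure of program order, send-before-receive, FIFO-channel order (receives of $m,m'$ from $s$ to $d$ ordered as the sends), and writes-into order on local variables; and messages are received iff sent. The timestamp transformation $\mathrm{TS}$. Each process $\widehat p$ has: integer local-counter (initially 0); arrays $\mathrm{counter}[\cdot]$ and $T[\cdot]$ indexed by processes, initially 0; a priority queue $\mathrm{priorityQ}[l]$ for each label $l\in L$ ordered by (timestamp, source) lexicographically; a FIFO queue $\mathrm{fifoQ}[\widehat q]$ for each process $\widehat q$. Queue elements are $[u,ts,c,src]$. $\mathrm{bcast}(u,l)$ ($l\in L\cup\{\bot\}$): send $[\mathrm{LBR},u,l]$ to $\widehat p$ itself. ProcessQueueElement$(qe,l,s)$: enqueue $qe$ into $\mathrm{priorityQ}[l]$ if $l\neq\bot$, else into $\mathrm{fifoQ}[s]$. HandleMessage: receive a message from some $\widehat s$; if $[\mathrm{LBR},u,l]$: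 $T[\widehat p]\gets T[\widehat p]+1$, local-counter $\gets$ local-counter$+1$, $qe\gets[u,T[\widehat p],\text{local-counter},\widehat p]$, ProcessQueueElement$(qe,l,\widehat p)$, send $[\mathrm{ORD},l,qe]$ to every other process; if $[\mathrm{TSUPD},t,\widehat q]$: $T[\widehat q]\gets t$; if $[\mathrm{ORD},l,qe]$: $T[\widehat s]\gets qe.ts$, ProcessQueueElement$(qe,l,\widehat s)$, and if $qe.ts>T[\widehat p]$ then $T[\widehat p]\gets qe.ts$ and send $[\mathrm{TSUPD},T[\widehat p],\widehat p]$ to every other process. CanExtract$(\mathrm{priorityQ}[l])$ holds iff the queue is nonempty and its minimum $qe$ satisfies $qe.c=\mathrm{counter}[qe.src]+1$ and $qe.ts\le T[\widehat q]$ for all $\widehat q$. CanDequeue$(\mathrm{fifoQ}[\widehat q])$ holds iff nonempty and its head $qe$ satisfies $qe.c=\mathrm{counter}[qe.src]+1$. deliver: while no priority queue satisfies CanExtract and no FIFO queue satisfies CanDequeue, call HandleMessage; then remove an element $qe$ from such a queue (extractmin, or FIFO dequeue), set $\mathrm{counter}[qe.src]\gets qe.c$, and return $qe.u$ with its label ($\bot$ for FIFO). Reads/writes of the original program are mapped to themselves. The only writes to $T[\cdot]$ are those listed above. *)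

(* Defs.v *)
(* Operational model of the TS transformation
   running on an NW (FIFO message-passing) network. *)
From mathcomp Require Import all_boot.
Set Implicit Arguments.
Unset Strict Implicit.
Unset Printing Implicit Defensive.

Section TS.
(* n processes 'I_n; U = type of broadcast payloads u; L = set of labels,
   [option L] = L ∪ {⊥} with None = ⊥. *)
Variables (n : nat) (U : Type) (L : eqType).

Record qelt := QElt { qu : U; qts : nat; qc : nat; qsrc : 'I_n }.

Inductive msg :=
| LBR of U & option L
| TSUPD of nat & 'I_n
| ORD of option L & qelt.

Record lstate := LState {
  lcounter : nat;
  counter : 'I_n -> nat;
  T : 'I_n -> nat;
  priorityQ : L -> seq qelt;       (* priorityQ[l] (min extracted by key) *)
  fifoQ : 'I_n -> seq qelt;        (* fifoQ[q] (head = first element) *)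
  in_deliver : bool
}.

(* global state: local states + FIFO channels chan s d (head = oldest) *)
Record gstate := GState { loc : 'I_n -> lstate; chan : 'I_n -> 'I_n -> seq msg }.

Definition upd (A : eqType) (B : Type) (f : A -> B) (a : A) (b : B) : A -> B :=
  fun x => if x == a then b else f x.

Definition set_T (st : lstate) (q : 'I_n) (v : nat) : lstate :=
  LState (lcounter st) (counter st) (upd (T st) q v) (priorityQ st) (fifoQ st) (in_deliver st).
Definition set_lc (st : lstate) (v : nat) : lstate :=
  LState v (counter st) (T st) (priorityQ st) (fifoQ st) (in_deliver st).
Definition set_pq (st : lstate) (l : L) (s : seq qelt) : lstate :=
  LState (lcounter st) (counter st) (T st) (upd (priorityQ st) l s) (fifoQ st) (in_deliver st).
Definition set_fq (st : lstate) (q : 'I_n) (s : seq qelt) : lstate :=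
  LState (lcounter st) (counter st) (T st) (priorityQ st) (upd (fifoQ st) q s) (in_deliver st).
Definition set_deliver (st : lstate) (b : bool) : lstate :=
  LState (lcounter st) (counter st) (T st) (priorityQ st) (fifoQ st) b.
Definition set_counter (st : lstate) (q : 'I_n) (v : nat) : lstate :=
  LState (lcounter st) (upd (counter st) q v) (T st) (priorityQ st) (fifoQ st) (in_deliver st).

Definition init_l : lstate :=
  LState 0 (fun _ => 0) (fun _ => 0) (fun _ => [::]) (fun _ => [::]) false.
Definition init : gstate := GState (fun _ => init_l) (fun _ _ => [::]).

Definition chans := 'I_n -> 'I_n -> seq msg.

Definition send (p d : 'I_n) (m : msg) (ch : chans) : chans :=
  fun s d' => if (s == p) && (d' == d) then rcons (ch s d') m else ch s d'.
Definition send_others (p : 'I_n) (m : msg) (ch : chans) : chans :=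
  fun s d => if (s == p) && (d != p) then rcons (ch s d) m else ch s d.
Definition set_chan (s d : 'I_n) (c : seq msg) (ch : chans) : chans :=
  fun s' d' => if (s' == s) && (d' == d) then c else ch s' d'.

Definition ProcessQueueElement (st : lstate) (qe : qelt) (l : option L) (s : 'I_n)
  : lstate :=
  match l with
  | Some l' => set_pq st l' (rcons (priorityQ st l') qe)
  | None => set_fq st s (rcons (fifoQ st s) qe)
  end.

(* A write by process p to its variable T[r] with value v: (p, r, v). *)
Definition write := ('I_n * 'I_n * nat)%type.

Definition HandleMessage (p s : 'I_n) (m : msg) (st : lstate) (ch : chans)
  : lstate * chans * seq write :=
  match m with
  | LBR u l =>
      let t := (T st p).+1 in
      let lc := (lcounter st).+1 in
      let qe := QElt u t lc p in
      let st2 := ProcessQueueElement (set_lc (set_T st p t) lc) qe l p in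
      (st2, send_others p (ORD l qe) ch, [:: (p, p, t)])
  | TSUPD t q => (set_T st q t, ch, [:: (p, q, t)])
  | ORD l qe =>
      let st2 := ProcessQueueElement (set_T st s (qts qe)) qe l s in
      if T st2 p < qts qe then
        (set_T st2 p (qts qe), send_others p (TSUPD (qts qe) p) ch,
         [:: (p, s, qts qe); (p, p, qts qe)])
      else (st2, ch, [:: (p, s, qts qe)])
  end.

Definition key_le (a b : qelt) : bool :=
  (qts a < qts b) || ((qts a == qts b) && (qsrc a <= qsrc b)).

Definition CanExtractAt (st : lstate) (l : L) (qe : qelt) (s1 s2 : seq qelt) : Prop :=
  [/\ priorityQ st l = s1 ++ qe :: s2,
      all (key_le qe) (s1 ++ s2),
      qc qe = (counter st (qsrc qe)).+1
    & forall q, qts qe <= T st q].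

Definition CanDequeueAt (st : lstate) (q : 'I_n) (qe : qelt) (rest : seq qelt) : Prop :=
  fifoQ st q = qe :: rest /\ qc qe = (counter st (qsrc qe)).+1.

Definition SomeReady (st : lstate) : Prop :=
  (exists l qe s1 s2, CanExtractAt st l qe s1 s2) \/
  (exists q qe rest, CanDequeueAt st q qe rest).

Definition finish_deliver (st : lstate) (qe : qelt) : lstate :=
  set_deliver (set_counter st (qsrc qe) (qc qe)) false.

(* One atomic step of the system TS(P) (application steps that do not touch
   the TS variables or the network are stuttering and omitted). *)
Inductive step : gstate -> seq write -> gstate -> Prop :=
| StBcast g p u l :
    step g [::] (GState (loc g) (send p p (LBR u l) (chan g)))
| StCallDeliver g p :
    ~~ in_deliver (loc g p) ->
    step g [::] (GState (upd (loc g) p (set_deliver (loc g p) true)) (chan g))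
| StHandle g p s m rest :
    in_deliver (loc g p) ->
    ~ SomeReady (loc g p) ->
    chan g s p = m :: rest ->
    let h := HandleMessage p s m (loc g p) (set_chan s p rest (chan g)) in
    step g h.2 (GState (upd (loc g) p h.1.1) h.1.2)
| StExtract g p l qe s1 s2 :
    in_deliver (loc g p) ->
    CanExtractAt (loc g p) l qe s1 s2 ->
    step g [::] (GState (upd (loc g) p
                   (finish_deliver (set_pq (loc g p) l (s1 ++ s2)) qe)) (chan g))
| StDequeue g p q qe rest :
    in_deliver (loc g p) ->
    CanDequeueAt (loc g p) q qe rest ->
    step g [::] (GState (upd (loc g) p
                   (finish_deliver (set_fq (loc g p) q rest) qe)) (chan g)).

Inductive reach : gstate -> seq write -> Prop :=
| Reach0 : reach init [::]
| ReachS g w g' w' : reach g w -> step g w' g' -> reach g' (w ++ w').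

End TS.

(* Main.v *)
Require Import Defs.
From mathcomp Require Import all_boot.
Set Implicit Arguments.
Unset Strict Implicit.
Unset Printing Implicit Defensive.

Section Proof.
Variables (n : nat) (U : Type) (L : eqType).
Local Notation gst := (gstate n U L).
Local Notation msgT := (msg n U L).

Definition mval (m : msgT) : option nat :=
  match m with LBR _ _ => None | TSUPD t _ => Some t | ORD _ qe => Some (qts qe) end.
Definition vals (c : seq msgT) := pmap mval c.
Definition wfm (s d : 'I_n) (m : msgT) : bool :=
  match m with LBR _ _ => s == d | TSUPD _ q => (q == s) && (s != d) | ORD _ _ => s != d end.
Definition chinvF (Tv : 'I_n -> 'I_n -> nat) (ch : chans n U L) :=
  forall a b, a != b -> path ltn (Tv b a) (vals (ch a b)) && (last (Tv b a) (vals (ch a b)) <= Tv a a).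
Definition Tv (g : gst) a b := T (loc g a) b.
Definition ws (w : seq (write n)) p r := [seq x.2 | x <- w & (x.1.1 == p) && (x.1.2 == r)].

Lemma vals_rcons c m : vals (rcons c m) = vals c ++ (if mval m is Some v then [:: v] else [::]).
Proof. by rewrite /vals -cats1 pmap_cat /=; case: (mval m). Qed.

Lemma vals_cons m c : vals (m :: c) = if mval m is Some v then v :: vals c else vals c.
Proof. by rewrite /vals /=; case: (mval m). Qed.

Lemma chinv_upd (Tv0 Tv1 : 'I_n -> 'I_n -> nat) (ch ch1 : chans n U L) p s m rest :
  chinvF Tv0 ch -> ch s p = m :: rest ->
  (forall a b, a != p -> Tv1 a b = Tv0 a b) ->
  (forall r, r != p -> r != s -> Tv1 p r = Tv0 p r) ->
  (s != p -> mval m = Some (Tv1 p s)) ->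
  (Tv1 p p = Tv0 p p /\ ch1 = set_chan s p rest ch \/
   exists M, [/\ Tv0 p p < Tv1 p p, mval M = Some (Tv1 p p) &
                ch1 = send_others p M (set_chan s p rest ch)]) ->
  chinvF Tv1 ch1.
Proof.
move=> H0 Hsp HTa HTp Hm Hch a b nab.
have Ha: forall a', a' != p -> ch1 a' b = set_chan s p rest ch a' b.
  by move=> a' na; case: Hch => [[_ ->]|[M [_ _ ->]]] //; rewrite /send_others (negbTE na).
case: (eqVneq a p) => [Eap|nap].
- subst a. have nbp : b != p by rewrite eq_sym.
  rewrite (HTa _ _ nbp).
  have Hsc : set_chan s p rest ch p b = ch p b by rewrite /set_chan (negbTE nbp) andbF.
  case: Hch => [[-> ->]|[M [lt HM ->]]]; first by rewrite Hsc; exact: H0.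
  rewrite /send_others eqxx nbp /= Hsc vals_rcons HM.
  move/andP: (H0 p b nab) => [Hp Hl].
  rewrite cats1 rcons_path Hp last_rcons leqnn andbT /=. exact: leq_ltn_trans Hl lt.
- rewrite (Ha _ nap) (HTa _ _ nap).
  case: (eqVneq a s) => [Eas|nas]; last first.
  + rewrite /set_chan (negbTE nas) /=.
    case: (eqVneq b p) => [Ebp|nbp].
    * subst b. rewrite (HTp a nap nas); exact: H0.
    * rewrite (HTa _ _ nbp); exact: H0.
  + subst a. case: (eqVneq b p) => [Ebp|nbp]; last first.
    * rewrite /set_chan eqxx (negbTE nbp) /= (HTa _ _ nbp); exact: H0.
    * subst b. rewrite /set_chan !eqxx /=. move: (H0 s p nab).
      by rewrite Hsp vals_cons (Hm nap) /= => /andP[/andP[_ ->] ->].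
Qed.

Lemma T_PQE (st : lstate n U L) qe l s : T (ProcessQueueElement st qe l s) = T st.
Proof. by case: l. Qed.

Lemma Tv_GS (g : gst) p st ch a b :
  Tv (GState (upd (loc g) p st) ch) a b = if a == p then T st b else Tv g a b.
Proof. by rewrite /Tv /upd /=; case: eqP. Qed.

Lemma chinv_ext Tv0 Tv1 ch : chinvF Tv0 ch -> (forall a b, Tv1 a b = Tv0 a b) -> chinvF Tv1 ch.
Proof. by move=> H E a b ab; rewrite !E; exact: H. Qed.

Lemma T_setT (st : lstate n U L) q v : T (set_T st q v) = upd (T st) q v.
Proof. by []. Qed.

Lemma ws_nil p r : ws [::] p r = [::]. Proof. by []. Qed.

Lemma wf_set_chan (ch : chans n U L) s p m rest :
  (forall a b, all (wfm a b) (ch a b)) -> ch s p = m :: rest ->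
  forall a b, all (wfm a b) (set_chan s p rest ch a b).
Proof.
move=> H E a b; rewrite /set_chan; case: ifP => [/andP[/eqP -> /eqP ->]|_] //.
by move: (H s p); rewrite E /= => /andP[].
Qed.

Lemma wf_send_others (ch : chans n U L) p M :
  (forall a b, all (wfm a b) (ch a b)) -> (forall d, d != p -> wfm p d M) ->
  forall a b, all (wfm a b) (send_others p M ch a b).
Proof.
move=> H HM a b; rewrite /send_others; case: ifP => [/andP[/eqP -> nd]|_] //.
by rewrite all_rcons HM // H.
Qed.

Lemma step_inv g w' g' : step g w' g' ->
  (forall s d, all (wfm s d) (chan g s d)) -> chinvF (Tv g) (chan g) ->
  [/\ forall s d, all (wfm s d) (chan g' s d), chinvF (Tv g') (chan g') &
      forall p r, path ltn (Tv g p r) (ws w' p r) /\ last (Tv g p r) (ws w' p r) = Tv g' p r].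
Proof.
case=> {g w' g'}.
- move=> g p u l Hwf Hch; split => //=.
  + move=> s d; rewrite /send; case: ifP => // /andP[/eqP -> /eqP ->].
    by rewrite all_rcons /= eqxx Hwf.
  + move=> a b ab; rewrite /send; case: ifP => _; last exact: Hch.
    by rewrite vals_rcons cats0; exact: Hch.
- move=> g p _ Hwf Hch; split => //=.
  + by eapply chinv_ext; [exact Hch|] => a b; rewrite Tv_GS; case: eqP => // ->.
  + by move=> a b; rewrite Tv_GS; case: eqP => // ->.
- move=> g p s m rest _ _ Hsp h Hwf Hch; rewrite {}/h.
  have := Hwf s p; rewrite Hsp /= => /andP[Hm _].
  case: m Hsp Hm => [u l0|t q|l0 qe] Hsp Hm /=.
  + move/eqP: Hm => Es; subst s. split.
    * apply: wf_send_others; first exact: (wf_set_chan Hwf Hsp).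
      by move=> d /=; rewrite eq_sym.
    * apply: (chinv_upd Hch Hsp).
      - by move=> a b nap; rewrite Tv_GS (negbTE nap).
      - by move=> r nrp _; rewrite Tv_GS eqxx T_PQE /= /upd (negbTE nrp).
      - by rewrite eqxx.
      - right; eexists; split; last reflexivity.
        + by rewrite Tv_GS eqxx T_PQE /= /upd eqxx.
        + by rewrite /= Tv_GS eqxx T_PQE /= /upd eqxx.
    * move=> a b; rewrite /ws /= Tv_GS.
      case: (eqVneq a p) => [->|nap]; last by [].
      rewrite T_PQE /= /upd; case: (eqVneq b p) => [->|nbp]; last by [].
      by rewrite /= andbT /Tv ltnSn.
  + case/andP: Hm => /eqP Eq nsp; subst q.
    have nps : p != s by rewrite eq_sym.
    have Hlt : Tv g p s < t.
      by move: (Hch s p nsp); rewrite Hsp vals_cons /= => /andP[/andP[]].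
    split.
    * exact: (wf_set_chan Hwf Hsp).
    * apply: (chinv_upd Hch Hsp).
      - by move=> a b nap; rewrite Tv_GS (negbTE nap).
      - by move=> r _ nrs; rewrite Tv_GS eqxx /= /upd (negbTE nrs).
      - by rewrite /= Tv_GS eqxx /= /upd eqxx.
      - by left; split; rewrite // Tv_GS eqxx /= /upd (negbTE nps).
    * move=> a b; rewrite /ws /= Tv_GS.
      case: (eqVneq a p) => [->|nap]; last by [].
      rewrite ?eqxx /= /upd; case: (eqVneq b s) => [->|nbs]; first by rewrite ?eqxx /= andbT Hlt.
      by [].
  + have nsp := Hm; have nps : p != s by rewrite eq_sym.
    have Hlt : Tv g p s < qts qe.
      by move: (Hch s p nsp); rewrite Hsp vals_cons /= => /andP[/andP[]].
    have E : T (ProcessQueueElement (set_T (loc g p) s (qts qe)) qe l0 s) p = T (loc g p) p.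
      by rewrite T_PQE /= /upd (negbTE nps).
    rewrite E; case: ifP => Hlt2 /=.
    * split.
      - apply: wf_send_others; first exact: (wf_set_chan Hwf Hsp).
        by move=> d ndp /=; rewrite eqxx eq_sym ndp.
      - apply: (chinv_upd Hch Hsp).
        + by move=> a b nap; rewrite Tv_GS (negbTE nap).
        + by move=> r nrp nrs; rewrite Tv_GS eqxx !T_setT T_PQE T_setT /upd (negbTE nrp) (negbTE nrs).
        + by move=> _; rewrite Tv_GS eqxx !T_setT T_PQE T_setT /upd (negbTE nsp) eqxx.
        + right; eexists; split; last reflexivity.
          * by rewrite Tv_GS eqxx !T_setT /upd eqxx.
          * by rewrite /= Tv_GS eqxx !T_setT /upd eqxx.
      - move=> a b; rewrite /ws /= Tv_GS.
        case: (eqVneq a p) => [->|nap]; last by [].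
        rewrite ?eqxx !T_setT T_PQE T_setT /upd.
        case: (eqVneq b s) => [->|nbs].
        + by rewrite /= (negbTE nps) /= Hlt (negbTE nsp).
        + case: (eqVneq b p) => [->|nbp]; last by [].
          by rewrite ?eqxx /= andbT /Tv Hlt2.
    * split.
      - exact: (wf_set_chan Hwf Hsp).
      - apply: (chinv_upd Hch Hsp).
        + by move=> a b nap; rewrite Tv_GS (negbTE nap).
        + by move=> r nrp nrs; rewrite Tv_GS eqxx T_PQE T_setT /upd (negbTE nrs).
        + by move=> _; rewrite Tv_GS eqxx T_PQE T_setT /upd eqxx.
        + by left; split; rewrite // Tv_GS eqxx E.
      - move=> a b; rewrite /ws /= Tv_GS.
        case: (eqVneq a p) => [->|nap]; last by [].
        rewrite ?eqxx T_PQE T_setT /upd.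
        case: (eqVneq b s) => [->|nbs]; last by [].
        by rewrite ?eqxx /= andbT Hlt.
- move=> g p l qe s1 s2 _ _ Hwf Hch; split => //=.
  + by eapply chinv_ext; [exact Hch|] => a b; rewrite Tv_GS; case: eqP => // ->.
  + by move=> a b; rewrite Tv_GS; case: eqP => // ->.
- move=> g p q qe rest _ _ Hwf Hch; split => //=.
  + by eapply chinv_ext; [exact Hch|] => a b; rewrite Tv_GS; case: eqP => // ->.
  + by move=> a b; rewrite Tv_GS; case: eqP => // ->.
Qed.

Lemma main_inv g w : reach g w ->
  [/\ forall s d, all (wfm s d) (chan g s d), chinvF (Tv g) (chan g) &
      forall p r, sorted ltn (ws w p r) /\ last 0 (ws w p r) = Tv g p r].
Proof.
elim => {g w} [|g w g' w' _ [H1 H2 H3] st].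
  by split.
have [A B C] := step_inv st H1 H2.
split => // p r.
have -> : ws (w ++ w') p r = ws w p r ++ ws w' p r by rewrite /ws filter_cat map_cat.
case: (H3 p r) (C p r) => Hs Hl [Hp Hl'].
split; last by rewrite last_cat Hl.
move: Hs Hl; case: (ws w p r) => [|x t] Hs Hl /=; first exact: path_sorted Hp.
rewrite cat_path; apply/andP; split; first exact: Hs.
by move: Hl => /= ->.
Qed.

End Proof.

Theorem mainTheorem5 (n : nat) (U : Type) (L : eqType)
    (g : gstate n U L) (w : seq (write n)) :
  reach g w ->
  (* NW: every sent message is received (all channels drained) *)
  (forall s d : 'I_n, chan g s d = [::]) ->
  forall p r : 'I_n,
    sorted ltn [seq x.2 | x <- w & (x.1.1 == p) && (x.1.2 == r)].
Proof.
move=> H _ p r; have [_ _ C] := main_inv H.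
by case: (C p r).
Qed.
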